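(* The behaviour bifunctor $B$ of \textbf{xTCL} has a locally final coalgebra $z\colon Z\to B(Z,Z)$, unique up to isomorphism. Moreover, there is a $\Sigma$-algebra structure $a\colon\Sigma Z\to Z$ such that $(Z,a,z)$ is a $\rho$-bialgebra, and it is adequate for strong applicative bisimilarity: if $\llbracket-\rrbracket\colon\mathsf{Tr}\to Z$ is the unique $\Sigma$-algebra morphism, then for all $\tau\in\mathsf{Ty}$ and $p,q\in\mathsf{Tr}_\tau$, $\llbracket p\rrbracket_\tau=\llbracket q\rrbracket_\tau$ implies $p\sim_\tau q$.
   Context: Types: $\tau::=\mathsf{unit}\mid\tau\to\tau$. $\Sigma$ is the $\mathsf{Ty}$-sorted signature (and induced polynomial endofunctor on $\mathbf{Set}^{\mathsf{Ty}}$) with, for all types: $\mathsf{e}\colon\mathsf{unit}$; $\mathsf{app}_{\tau_1,\tau_2}\colon(\tau_1\to\tau_2)\times\tau_1\to\tau_2$ (written $s\,t$); constants $S_{\tau_1,\tau_2,\tau_3}\colon(\tau_1\to\tau_2\to\tau_3)\to(\tau_1\to\tau_2)\to\tau_1\to\tau_3$, $K_{\tau_1,\tau_2}\colon\tau_1\to\tau_2\to\tau_1$, $I_\tau\colon\tau\to\tau$; and $S'\colon(\tau_1\to\tau_2\to\tau_3)\to((\tau_1\to\tau_2)\to\tau_1\to\tau_3)$, $S''\colon(\tau_1\to\tau_2\to\tau_3)\times(\tau_1\to\tau_2)\to(\tau_1\to\tau_3)$, $K'\colon\tau_1\to(\tau_2\to\tau_1)$. $\mathsf{Tr}=\mu\Sigma$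 is the sorted set of closed terms. $B(X,Y)$ is given by $B_{\mathsf{unit}}(X,Y)=Y_{\mathsf{unit}}+1$, $B_{\tau_1\to\tau_2}(X,Y)=Y_{\tau_1\to\tau_2}+Y_{\tau_2}^{X_{\tau_1}}$. A higher-order coalgebra is $c\colon C\to B(C,C)$; it is locally final if it is a final coalgebra for the endofunctor $B(C,-)$. The higher-order GSOS law $\rho_{X,Y}\colon\Sigma(X\times B(X,Y))\to B(X,\Sigma^\star(X+Y))$ ($\Sigma^\star$ the free-term monad; injections and units left implicit) is: $\mathsf{e}\mapsto *$; $S\mapsto\lambda t.\,S'(t)$; $S'(p,\_)\mapsto\lambda t.\,S''(p,t)$; $S''((p,\_),(q,\_))\mapsto\lambda t.\,(p\,t)\,(q\,t)$; $K\mapsto\lambda t.\,K'(t)$; $K'(p,\_)\mapsto\lambda t.\,p$; $I\mapsto\lambda t.\,t$; $\mathsf{app}((p,f),(q,\_))\mapsto f(q)$ if $f\in Y_{\tau_2}^{X_{\tau_1}}$ and $\mapsto\mathsf{app}(f,q)$ if $f\in Y_{\tau_1\to\tau_2}$ (both in the left summand of $B_{\tau_2}$); functions $\lambda t.(\dots)$ land in the right summand. A $\rho$-bialgebra is $(X,a,c)$ with $c\cdot a=B(\mathrm{id},\hat a\cdot\Sigma^\star\nabla)\cdot\rho_{X,X}\cdot\Sigma\langle\mathrm{id},c\rangle$, where $\hat a\colon\Sigma^\star X\to X$ evaluates terms. Transitions on $\mathsf{Tr}$: $S\xrightarrow{t}S'(t)$, $S'(p)\xrightarrow{t}S''(p,t)$,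 $S''(p,q)\xrightarrow{t}(p\,t)\,(q\,t)$, $K\xrightarrow{t}K'(t)$, $K'(p)\xrightarrow{t}p$, $I\xrightarrow{t}t$, $\mathsf{e}\xrightarrow{\checkmark}$; if $p\to p'$ then $p\,q\to p'\,q$; if $p\xrightarrow{q}p'$ then $p\,q\to p'$. Strong applicative bisimilarity $\sim=(\sim_\tau)$ is the greatest $\mathsf{Ty}$-indexed equivalence relation on $\mathsf{Tr}$ such that: if $p\sim_{\mathsf{unit}}q$ and $p\to p'$ then $q\to q'$ with $p'\sim_{\mathsf{unit}}q'$; if $p\sim_{\mathsf{unit}}q$ and $p\xrightarrow{\checkmark}$ then $q\xrightarrow{\checkmark}$; if $p\sim_{\tau_1\to\tau_2}q$ and $p\to p'$ then $q\to q'$ with $p'\sim_{\tau_1\to\tau_2}q'$; if $p\sim_{\tau_1\to\tau_2}q$ and $p\xrightarrow{t}p'$ then $q\xrightarrow{t}q'$ with $p'\sim_{\tau_2}q'$. *)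

(* Defs.v *)
From Stdlib Require Import RelationClasses.

Inductive Ty : Type := Tunit : Ty | Tarr : Ty -> Ty -> Ty.

Definition SSet := Ty -> Type.
Definition SSum (X Y : SSet) : SSet := fun t => (X t + Y t)%type.
Definition SProd (X Y : SSet) : SSet := fun t => (X t * Y t)%type.
Definition Void : SSet := fun _ => Empty_set.

Inductive Sig (X : SSet) : Ty -> Type :=
| Se : Sig X Tunit
| Sapp (t1 t2 : Ty) : X (Tarr t1 t2) -> X t1 -> Sig X t2
| SS (t1 t2 t3 : Ty) :
    Sig X (Tarr (Tarr t1 (Tarr t2 t3)) (Tarr (Tarr t1 t2) (Tarr t1 t3)))
| SS1 (t1 t2 t3 : Ty) : X (Tarr t1 (Tarr t2 t3)) -> Sig X (Tarr (Tarr t1 t2) (Tarr t1 t3))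
| SS2 (t1 t2 t3 : Ty) : X (Tarr t1 (Tarr t2 t3)) -> X (Tarr t1 t2) -> Sig X (Tarr t1 t3)
| SK (t1 t2 : Ty) : Sig X (Tarr t1 (Tarr t2 t1))
| SK1 (t1 t2 : Ty) : X t1 -> Sig X (Tarr t2 t1)
| SI (t : Ty) : Sig X (Tarr t t).

Arguments Se {X}.
Arguments Sapp {X t1 t2}.
Arguments SS {X}.
Arguments SS1 {X t1 t2 t3}.
Arguments SS2 {X t1 t2 t3}.
Arguments SK {X}.
Arguments SK1 {X t1} t2.
Arguments SI {X}.

Definition Sig_map {X Y : SSet} (f : forall t, X t -> Y t) (t : Ty) (s : Sig X t) : Sig Y t :=
  match s in Sig _ t0 return Sig Y t0 with
  | Se => Se
  | Sapp p q => Sapp (f _ p) (f _ q)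
  | SS t1 t2 t3 => SS t1 t2 t3
  | SS1 p => SS1 (f _ p)
  | SS2 p q => SS2 (f _ p) (f _ q)
  | SK t1 t2 => SK t1 t2
  | SK1 t2 p => SK1 t2 (f _ p)
  | SI t0 => SI t0
  end.

Definition Alg (X : SSet) := forall t, Sig X t -> X t.

Definition is_alg_hom {X Y : SSet} (a : Alg X) (b : Alg Y) (h : forall t, X t -> Y t) : Prop :=
  forall t (s : Sig X t), h t (a t s) = b t (Sig_map h t s).

Inductive Term (V : SSet) : Ty -> Type :=
| var (t : Ty) : V t -> Term V t
| Te : Term V Tunit
| Tapp (t1 t2 : Ty) : Term V (Tarr t1 t2) -> Term V t1 -> Term V t2
| TS (t1 t2 t3 : Ty) :
    Term V (Tarr (Tarr t1 (Tarr t2 t3)) (Tarr (Tarr t1 t2) (Tarr t1 t3)))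
| TS1 (t1 t2 t3 : Ty) : Term V (Tarr t1 (Tarr t2 t3)) -> Term V (Tarr (Tarr t1 t2) (Tarr t1 t3))
| TS2 (t1 t2 t3 : Ty) : Term V (Tarr t1 (Tarr t2 t3)) -> Term V (Tarr t1 t2) -> Term V (Tarr t1 t3)
| TK (t1 t2 : Ty) : Term V (Tarr t1 (Tarr t2 t1))
| TK1 (t1 t2 : Ty) : Term V t1 -> Term V (Tarr t2 t1)
| TI (t : Ty) : Term V (Tarr t t).

Arguments var {V t}.
Arguments Te {V}.
Arguments Tapp {V t1 t2}.
Arguments TS {V}.
Arguments TS1 {V t1 t2 t3}.
Arguments TS2 {V t1 t2 t3}.
Arguments TK {V}.
Arguments TK1 {V t1} t2.
Arguments TI {V}.

Definition op (V : SSet) : Alg (Term V) := fun t s =>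
  match s in Sig _ t0 return Term V t0 with
  | Se => Te
  | Sapp p q => Tapp p q
  | SS t1 t2 t3 => TS t1 t2 t3
  | SS1 p => TS1 p
  | SS2 p q => TS2 p q
  | SK t1 t2 => TK t1 t2
  | SK1 t2 p => TK1 t2 p
  | SI t0 => TI t0
  end.

Fixpoint tfold {V A : SSet} (a : Alg A) (v : forall t, V t -> A t) (t : Ty) (u : Term V t) : A t :=
  match u in Term _ t0 return A t0 with
  | var x => v _ x
  | Te => a _ Se
  | Tapp p q => a _ (Sapp (tfold a v _ p) (tfold a v _ q))
  | TS t1 t2 t3 => a _ (SS t1 t2 t3)
  | TS1 p => a _ (SS1 (tfold a v _ p))
  | TS2 p q => a _ (SS2 (tfold a v _ p) (tfold a v _ q))
  | TK t1 t2 => a _ (SK t1 t2)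
  | TK1 t2 p => a _ (SK1 t2 (tfold a v _ p))
  | TI t0 => a _ (SI t0)
  end.

Definition eval {X : SSet} (a : Alg X) : forall t, Term X t -> X t := tfold a (fun _ x => x).
Definition Term_map {V W : SSet} (f : forall t, V t -> W t) : forall t, Term V t -> Term W t :=
  tfold (op W) (fun t x => var (f t x)).
Definition nabla (X : SSet) : forall t, SSum X X t -> X t :=
  fun t x => match x with inl y => y | inr y => y end.

Definition Tr : SSet := Term Void.

Definition BR (X Y : SSet) (t : Ty) : Type :=
  match t with
  | Tunit => unit
  | Tarr t1 t2 => X t1 -> Y t2
  end.
Definition B (X Y : SSet) (t : Ty) : Type := (Y t + BR X Y t)%type.

Definition BRmap {X X' Y Y' : SSet} (f : forall t, X' t -> X t) (g : forall t, Y t -> Y' t)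
  (t : Ty) : BR X Y t -> BR X' Y' t :=
  match t as t0 return BR X Y t0 -> BR X' Y' t0 with
  | Tunit => fun u => u
  | Tarr t1 t2 => fun h x => g t2 (h (f t1 x))
  end.

Definition Bmap {X X' Y Y' : SSet} (f : forall t, X' t -> X t) (g : forall t, Y t -> Y' t)
  (t : Ty) (b : B X Y t) : B X' Y' t :=
  match b with
  | inl y => inl (g t y)
  | inr r => inr (BRmap f g t r)
  end.

Definition HCoalg (C : SSet) := forall t, C t -> B C C t.

Definition is_Bcoalg_hom {C D : SSet} (c : HCoalg C) (d : forall t, D t -> B C D t)
  (h : forall t, D t -> C t) : Prop :=
  forall t (x : D t), c t (h t x) = Bmap (fun _ y => y) h t (d t x).

Definition locally_final {C : SSet} (c : HCoalg C) : Prop :=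
  forall (D : SSet) (d : forall t, D t -> B C D t),
    exists h : forall t, D t -> C t,
      is_Bcoalg_hom c d h /\
      forall h' : forall t, D t -> C t, is_Bcoalg_hom c d h' -> forall t x, h' t x = h t x.

Definition hcoalg_iso {Z Z' : SSet} (z : HCoalg Z) (z' : HCoalg Z')
  (f : forall t, Z t -> Z' t) (g : forall t, Z' t -> Z t) : Prop :=
  (forall t x, g t (f t x) = x) /\ (forall t y, f t (g t y) = y) /\
  (forall t x, z' t (f t x) = Bmap g f t (z t x)).

Definition rho (X Y : SSet) (t : Ty) (s : Sig (SProd X (B X Y)) t) : B X (Term (SSum X Y)) t :=
  match s in Sig _ t0 return B X (Term (SSum X Y)) t0 with
  | Se => inr tt
  | @Sapp _ t1 t2 pf qg =>
      let (p, f) := pf in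
      let (q, _) := qg in
      match f with
      | inl p' => inl (Tapp (var (inr p')) (var (inl q)))
      | inr g => inl (var (inr (g q)))
      end
  | SS t1 t2 t3 => inr (fun x => TS1 (var (inl x)))
  | SS1 pf => let (p, _) := pf in inr (fun x => TS2 (var (inl p)) (var (inl x)))
  | SS2 pf qg => let (p, _) := pf in let (q, _) := qg in
      inr (fun x => Tapp (Tapp (var (inl p)) (var (inl x))) (Tapp (var (inl q)) (var (inl x))))
  | SK t1 t2 => inr (fun x => TK1 t2 (var (inl x)))
  | SK1 t2 pf => let (p, _) := pf in inr (fun _ => var (inl p))
  | SI t0 => inr (fun x => var (inl x))
  end.

Definition is_rho_bialgebra {X : SSet} (a : Alg X) (c : HCoalg X) : Prop :=
  forall t (s : Sig X t),
    c t (a t s) =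
    Bmap (fun _ y => y) (fun t0 u => eval a t0 (Term_map (nabla X) t0 u)) t
      (rho X X t (Sig_map (fun t0 x => (x, c t0 x) : SProd X (B X X) t0) t s)).

Inductive tstep : forall {t}, Tr t -> Tr t -> Prop :=
| tstep_app1 (t1 t2 : Ty) (p p' : Tr (Tarr t1 t2)) (q : Tr t1) :
    tstep p p' -> tstep (Tapp p q) (Tapp p' q)
| tstep_app2 (t1 t2 : Ty) (p : Tr (Tarr t1 t2)) (q : Tr t1) (p' : Tr t2) :
    lstep p q p' -> tstep (Tapp p q) p'
with lstep : forall {t1 t2}, Tr (Tarr t1 t2) -> Tr t1 -> Tr t2 -> Prop :=
| lstep_S (t1 t2 t3 : Ty) (u : Tr (Tarr t1 (Tarr t2 t3))) :
    lstep (TS t1 t2 t3) u (TS1 u)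
| lstep_S1 (t1 t2 t3 : Ty) (p : Tr (Tarr t1 (Tarr t2 t3))) (u : Tr (Tarr t1 t2)) :
    lstep (TS1 p) u (TS2 p u)
| lstep_S2 (t1 t2 t3 : Ty) (p : Tr (Tarr t1 (Tarr t2 t3))) (q : Tr (Tarr t1 t2)) (u : Tr t1) :
    lstep (TS2 p q) u (Tapp (Tapp p u) (Tapp q u))
| lstep_K (t1 t2 : Ty) (u : Tr t1) :
    lstep (TK t1 t2) u (TK1 t2 u)
| lstep_K1 (t1 t2 : Ty) (p : Tr t1) (u : Tr t2) :
    lstep (TK1 t2 p) u p
| lstep_I (t : Ty) (u : Tr t) :
    lstep (TI t) u u.

Inductive term_ok : Tr Tunit -> Prop :=
| term_ok_e : term_ok Te.

Definition is_sab (R : forall t, Tr t -> Tr t -> Prop) : Prop :=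
  (forall t, Equivalence (R t)) /\
  (forall t (p q p' : Tr t), R t p q -> tstep p p' -> exists q', tstep q q' /\ R t p' q') /\
  (forall p q : Tr Tunit, R Tunit p q -> term_ok p -> term_ok q) /\
  (forall t1 t2 (p q : Tr (Tarr t1 t2)) (u : Tr t1) (p' : Tr t2),
      R (Tarr t1 t2) p q -> lstep p u p' -> exists q', lstep q u q' /\ R t2 p' q').

Definition sab_sim (t : Ty) (p q : Tr t) : Prop :=
  exists R, is_sab R /\ R t p q.

(* Main.v *)
Require Import Defs.
From Stdlib Require Import RelationClasses Classical ClassicalEpsilon FunctionalExtensionality.

Fixpoint Z (t : Ty) : Type :=
  match t with
  | Tunit => option nat
  | Tarr t1 t2 => option (nat * (Z t1 -> Z t2))
  end.

Definition zc (t : Ty) : Z t -> B Z Z t :=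
  match t as t0 return Z t0 -> B Z Z t0 with
  | Tunit => fun w => match w with
      | None => inl None
      | Some 0 => inr tt
      | Some (S n) => inl (Some n) end
  | Tarr t1 t2 => fun w => match w with
      | None => inl None
      | Some (0, f) => inr f
      | Some (S n, f) => inl (Some (n, f)) end
  end.

Lemma zc_inj t (w1 w2 : Z t) : zc t w1 = zc t w2 -> w1 = w2.
Proof.
  destruct t; simpl in *.
  - destruct w1 as [[|n]|], w2 as [[|m]|]; simpl; intro H; inversion H; subst; auto;
      destruct u; reflexivity.
  - destruct w1 as [[[|n] f]|], w2 as [[[|m] g]|]; simpl; intro H; inversion H; subst; auto.
Qed.

Definition tm (t : Ty) : Z t -> option nat :=
  match t as t0 return Z t0 -> option nat with
  | Tunit => fun w => w
  | Tarr _ _ => fun w => option_map fst w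
  end.

Lemma tm_0 t (w : Z t) : tm t w = Some 0 -> exists r, zc t w = inr r.
Proof.
  destruct t; simpl.
  - destruct w as [[|n]|]; simpl; intro H; inversion H; eauto.
  - destruct w as [[[|n] f]|]; simpl; intro H; inversion H; eauto.
Qed.

Lemma tm_S t (w : Z t) n : tm t w = Some (S n) -> exists w', zc t w = inl w' /\ tm t w' = Some n.
Proof.
  destruct t; simpl.
  - destruct w as [[|m]|]; simpl; intro H; inversion H; subst; eauto.
  - destruct w as [[[|m] f]|]; simpl; intro H; inversion H; subst; eauto.
Qed.

Lemma tm_None t (w1 w2 : Z t) : tm t w1 = None -> tm t w2 = None -> w1 = w2.
Proof.
  destruct t; simpl.
  - intros; congruence.
  - destruct w1 as [[n f]|], w2 as [[m g]|]; simpl; intros H1 H2; congruence.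
Qed.

Section Final.
Variables (D : SSet) (d : forall t, D t -> B Z D t).

Inductive conv (t : Ty) : nat -> D t -> BR Z D t -> Prop :=
| conv0 x r : d t x = inr r -> conv t 0 x r
| convS n x y r : d t x = inl y -> conv t n y r -> conv t (S n) x r.

Lemma conv_uniq t n x r : conv t n x r -> forall m r', conv t m x r' -> n = m /\ r = r'.
Proof.
  induction 1; intros m r' H'; inversion H'; subst; try congruence.
  - rewrite H in H0; inversion H0; auto.
  - match goal with E1 : d t ?x = inl ?y, E2 : d t ?x = inl ?y2, HC : conv t ?n0 ?y2 r' |- _ =>
    rewrite E1 in E2; inversion E2; subst; destruct (IHconv _ _ HC); subst; auto end.
Qed.

Definition obs (t : Ty) (x : D t) : option (nat * BR Z D t) :=
  match excluded_middle_informative (exists n r, conv t n x r) with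
  | left H => let (n, H') := constructive_indefinite_description _ H in
              let (r, _) := constructive_indefinite_description _ H' in Some (n, r)
  | right _ => None
  end.

Lemma obs_some t x n r : conv t n x r -> obs t x = Some (n, r).
Proof.
  intro Hc. unfold obs. destruct (excluded_middle_informative _) as [H|H].
  - destruct (constructive_indefinite_description _ H) as [m Hm].
    destruct (constructive_indefinite_description _ Hm) as [r' Hr'].
    destruct (conv_uniq _ _ _ _ Hc _ _ Hr'); subst; auto.
  - exfalso; eauto.
Qed.

Lemma obs_none t x : (forall n r, ~ conv t n x r) -> obs t x = None.
Proof.
  intro Hc. unfold obs. destruct (excluded_middle_informative _) as [H|H]; auto.
  destruct H as [n [r H]]; exfalso; eapply Hc; eauto.
Qed.

Lemma obs_inl t x y : d t x = inl y ->
  obs t x = match obs t y with Some (n, r) => Some (S n, r) | None => None end.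
Proof.
  intro E. destruct (classic (exists n r, conv t n y r)) as [[n [r H]]|H].
  - rewrite (obs_some _ _ _ _ H). apply obs_some. econstructor; eauto.
  - rewrite (obs_none t y). 2:{ intros n r Hc; apply H; eauto. }
    apply obs_none. intros n r Hc. inversion Hc; subst; try congruence.
    rewrite E in H0; inversion H0; subst. apply H; eauto.
Qed.

Lemma obs_inr t x r : d t x = inr r -> obs t x = Some (0, r).
Proof. intro E. apply obs_some. constructor; auto. Qed.

Fixpoint hfin (t : Ty) : D t -> Z t :=
  match t as t0 return D t0 -> Z t0 with
  | Tunit => fun x => match obs Tunit x with Some (n, _) => Some n | None => None end
  | Tarr t1 t2 => fun x => match obs (Tarr t1 t2) x with
       | Some (n, r) => Some (n, fun w => hfin t2 (r w)) | None => None end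
  end.

Lemma hfin_hom : is_Bcoalg_hom zc d hfin.
Proof.
  intros t x. destruct (d t x) eqn:E.
  - pose proof (obs_inl _ _ _ E) as Ho.
    destruct t; simpl; rewrite Ho; destruct (obs _ d0) as [[n r]|]; reflexivity.
  - pose proof (obs_inr _ _ _ E) as Ho.
    destruct t; simpl; rewrite Ho; simpl; auto. destruct b; auto.
Qed.

Lemma hom_conv (h : forall t, D t -> Z t) : is_Bcoalg_hom zc d h ->
  forall t n x, tm t (h t x) = Some n -> exists r, conv t n x r.
Proof.
  intros Hh t n. induction n; intros x Ht.
  - destruct (tm_0 _ _ Ht) as [r Hr]. rewrite Hh in Hr.
    destruct (d t x) eqn:E; simpl in Hr; try discriminate.
    exists b; constructor; auto.
  - destruct (tm_S _ _ _ Ht) as [w' [Hw Hw']]. rewrite Hh in Hw.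
    destruct (d t x) eqn:E; simpl in Hw; try discriminate.
    inversion Hw; subst. destruct (IHn _ Hw') as [r Hr]. exists r; econstructor; eauto.
Qed.

Lemma hom_uniq (h1 h2 : forall t, D t -> Z t) : is_Bcoalg_hom zc d h1 -> is_Bcoalg_hom zc d h2 ->
  forall t x, h1 t x = h2 t x.
Proof.
  intros H1 H2 t. induction t as [|t1 _ t2 IH2]; intro x;
  (destruct (classic (exists n r, conv _ n x r)) as [[n [r Hc]]|Hn];
   [ induction Hc;
     [ apply zc_inj; rewrite H1, H2, H; simpl; try reflexivity;
       f_equal; apply functional_extensionality; intro; apply IH2
     | apply zc_inj; rewrite H1, H2, H; simpl; congruence ]
   | apply tm_None;
     [ destruct (tm _ (h1 _ x)) eqn:E; auto; destruct (hom_conv _ H1 _ _ _ E) as [r Hr];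
       exfalso; eauto
     | destruct (tm _ (h2 _ x)) eqn:E; auto; destruct (hom_conv _ H2 _ _ _ E) as [r Hr];
       exfalso; eauto ] ]).
Qed.

End Final.

Lemma zc_final : locally_final zc.
Proof.
  intros D d. exists (hfin D d). split. apply hfin_hom.
  intros h' H' t x. apply (hom_uniq D d); auto. apply hfin_hom.
Qed.
Lemma Bmap_comp {C E F : SSet} s (b : B C C s) (g : forall s, C s -> E s) (h : forall s, E s -> F s) :
  Bmap (fun _ y => y) h s (Bmap (fun _ y => y) g s b) = Bmap (fun _ y => y) (fun s y => h s (g s y)) s b.
Proof. destruct b; destruct s; reflexivity. Qed.

Lemma Bmap_id {C : SSet} s (b : B C C s) : Bmap (fun _ y => y) (fun _ y => y) s b = b.
Proof. destruct b; destruct s; reflexivity. Qed.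

Lemma BRmap_ext {C E : SSet} s (r : BR C C s) (h : forall s, E s -> C s) (g : forall s, C s -> E s) :
  (forall s y, h s (g s y) = y) ->
  BRmap (fun _ y => y) h s (BRmap (fun _ y => y) g s r) = r.
Proof.
  intro H. destruct s; simpl; auto. apply functional_extensionality; intro; apply H.
Qed.

Section Gen.
Variables (C : SSet) (c : HCoalg C) (Hc : locally_final c) (t : Ty) (X : Type)
  (step : X -> (X + BR C C t)%type).

Definition DD : SSet := fun s => (C s + {e : t = s & X})%type.

Definition dd (s : Ty) (w : DD s) : B C DD s :=
  match w with
  | inl y => Bmap (fun _ y => y) (fun s0 (y0 : C s0) => (inl y0 : DD s0)) s (c s y)
  | inr (existT _ e x) =>
      match e in _ = s0 return B C DD s0 with
      | eq_refl => match step x with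
          | inl x' => inl (inr (existT _ eq_refl x'))
          | inr r => inr (BRmap (fun _ y => y) (fun s0 (y0 : C s0) => (inl y0 : DD s0)) t r)
          end
      end
  end.

Lemma genA : exists f : X -> C t, forall x,
  c t (f x) = match step x with inl x' => inl (f x') | inr r => inr r end.
Proof.
  destruct (Hc DD dd) as [h [Hh _]].
  destruct (Hc C c) as [k [Hk Hku]].
  assert (Hinl : forall s y, h s (inl y) = y).
  { intros s y. rewrite (Hku (fun s y => h s (inl y))).
    - symmetry. apply (Hku (fun _ y => y)). intros s' y'. rewrite Bmap_id. reflexivity.
    - intros s' y'. rewrite Hh. simpl. rewrite Bmap_comp. reflexivity. }
  exists (fun x => h t (inr (existT _ eq_refl x))). intro x.
  rewrite Hh. unfold dd. destruct (step x); simpl; auto.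
  f_equal. apply BRmap_ext. auto.
Qed.

Definition hh (f : X -> C t) (s : Ty) (w : DD s) : C s :=
  match w with
  | inl y => y
  | inr (existT _ e x) => match e in _ = s0 return C s0 with eq_refl => f x end
  end.

Lemma genB (f1 f2 : X -> C t) :
  (forall x, c t (f1 x) = match step x with inl x' => inl (f1 x') | inr r => inr r end) ->
  (forall x, c t (f2 x) = match step x with inl x' => inl (f2 x') | inr r => inr r end) ->
  forall x, f1 x = f2 x.
Proof.
  intros E1 E2.
  assert (Hom : forall f, (forall x, c t (f x) = match step x with inl x' => inl (f x') | inr r => inr r end) ->
     is_Bcoalg_hom c dd (hh f)).
  { intros f Ef s [y | [e x]].
    - simpl. rewrite Bmap_comp. symmetry. apply Bmap_id.
    - destruct e. simpl. rewrite Ef. destruct (step x); simpl; auto.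
      f_equal. symmetry. apply BRmap_ext. auto. }
  destruct (Hc DD dd) as [h [Hh Hu]].
  intro x.
  pose proof (Hu _ (Hom _ E1) t (inr (existT _ eq_refl x))) as U1.
  pose proof (Hu _ (Hom _ E2) t (inr (existT _ eq_refl x))) as U2.
  simpl in U1, U2. congruence.
Qed.

Definition mkf : X -> C t := proj1_sig (constructive_indefinite_description _ genA).
Lemma mkf_spec x : c t (mkf x) = match step x with inl x' => inl (mkf x') | inr r => inr r end.
Proof. unfold mkf. destruct (constructive_indefinite_description _ genA); simpl; auto. Qed.

End Gen.

Arguments mkf {C} c Hc t {X} step.

Section Iso.
Variables (Z' : SSet) (z' : HCoalg Z') (Hz' : locally_final z').

Fixpoint build (t : Ty) : ((Z t -> Z' t) * (Z' t -> Z t))%type :=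
  match t as t0 return ((Z t0 -> Z' t0) * (Z' t0 -> Z t0))%type with
  | Tunit => (mkf z' Hz' Tunit (fun x => zc Tunit x), mkf zc zc_final Tunit (fun y => z' Tunit y))
  | Tarr t1 t2 =>
     (mkf z' Hz' (Tarr t1 t2) (fun x : Z (Tarr t1 t2) => match zc (Tarr t1 t2) x with
          | inl x' => inl x'
          | inr r => inr (fun a => fst (build t2) (r (snd (build t1) a))) end),
      mkf zc zc_final (Tarr t1 t2) (fun y : Z' (Tarr t1 t2) => match z' (Tarr t1 t2) y with
          | inl y' => inl y'
          | inr r => inr (fun a => snd (build t2) (r (fst (build t1) a))) end))
  end.

Lemma build_iso : hcoalg_iso zc z' (fun t => fst (build t)) (fun t => snd (build t)).
Proof.
  assert (Inv : forall t, (forall x, snd (build t) (fst (build t) x) = x) /\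
                          (forall y, fst (build t) (snd (build t) y) = y)).
  { induction t as [|t1 [IA1 IB1] t2 [IA2 IB2]]; split.
    - apply (genB Z zc zc_final Tunit (Z Tunit) (fun x => zc Tunit x)); intro x.
      + cbn [fst snd build]. rewrite mkf_spec. rewrite mkf_spec. destruct (zc Tunit x); auto.
      + destruct (zc Tunit x); auto.
    - apply (genB Z' z' Hz' Tunit (Z' Tunit) (fun x => z' Tunit x)); intro x.
      + cbn [fst snd build]. rewrite mkf_spec. rewrite mkf_spec. destruct (z' Tunit x); auto.
      + destruct (z' Tunit x); auto.
    - apply (genB Z zc zc_final (Tarr t1 t2) (Z (Tarr t1 t2)) (fun x => zc (Tarr t1 t2) x)); intro x.
      + cbn [fst snd build]. rewrite mkf_spec. rewrite mkf_spec.
        destruct (zc (Tarr t1 t2) x); auto. f_equal.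
        apply functional_extensionality; intro a. simpl. rewrite IA1, IA2. reflexivity.
      + destruct (zc (Tarr t1 t2) x); auto.
    - apply (genB Z' z' Hz' (Tarr t1 t2) (Z' (Tarr t1 t2)) (fun x => z' (Tarr t1 t2) x)); intro x.
      + cbn [fst snd build]. rewrite mkf_spec. rewrite mkf_spec.
        destruct (z' (Tarr t1 t2) x); auto. f_equal.
        apply functional_extensionality; intro a. simpl. rewrite IB1, IB2. reflexivity.
      + destruct (z' (Tarr t1 t2) x); auto. }
  split; [|split].
  - intros; apply Inv.
  - intros; apply Inv.
  - intros t x. destruct t as [|t1 t2]; cbn [fst snd build]; rewrite mkf_spec;
      destruct (zc _ x); simpl; auto; destruct b; auto.
Qed.

End Iso.
Definition delay (t : Ty) : Z t -> Z t :=
  match t as t0 return Z t0 -> Z t0 with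
  | Tunit => fun w => match w with None => None | Some n => Some (S n) end
  | Tarr _ _ => fun w => match w with None => None | Some (n, f) => Some (S n, f) end
  end.

Definition znone (t : Ty) : Z t :=
  match t as t0 return Z t0 with Tunit => None | Tarr _ _ => None end.

Lemma zc_delay t w : zc t (delay t w) = inl w.
Proof. destruct t; destruct w as [[]|]; reflexivity. Qed.

Lemma zc_znone t : zc t (znone t) = inl (znone t).
Proof. destruct t; reflexivity. Qed.

Definition appZ (t1 t2 : Ty) (p : Z (Tarr t1 t2)) (q : Z t1) : Z t2 :=
  match p with
  | None => znone t2
  | Some (n, g) => Nat.iter (S n) (delay t2) (g q)
  end.

Lemma zc_app t1 t2 P Q : zc t2 (appZ t1 t2 P Q) =
  match zc (Tarr t1 t2) P with inl P' => inl (appZ t1 t2 P' Q) | inr g => inl (g Q) end.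
Proof.
  destruct P as [[[|n] g]|]; unfold appZ; cbn [zc].
  - apply zc_delay.
  - change (Nat.iter (S (S n)) (delay t2) (g Q)) with (delay t2 (Nat.iter (S n) (delay t2) (g Q))).
    apply zc_delay.
  - apply zc_znone.
Qed.

Definition aZ : Alg Z := fun t s =>
  match s in Sig _ t0 return Z t0 with
  | Se => Some 0
  | @Sapp _ t1 t2 p q => appZ t1 t2 p q
  | SS t1 t2 t3 => Some (0, fun x => Some (0, fun y => Some (0, fun u =>
        appZ t2 t3 (appZ t1 (Tarr t2 t3) x u) (appZ t1 t2 y u))))
  | @SS1 _ t1 t2 t3 p => Some (0, fun y => Some (0, fun u =>
        appZ t2 t3 (appZ t1 (Tarr t2 t3) p u) (appZ t1 t2 y u)))
  | @SS2 _ t1 t2 t3 p q => Some (0, fun u =>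
        appZ t2 t3 (appZ t1 (Tarr t2 t3) p u) (appZ t1 t2 q u))
  | SK t1 t2 => Some (0, fun x => Some (0, fun _ => x))
  | SK1 t2 p => Some (0, fun _ => p)
  | SI t => Some (0, fun x => x)
  end.

Lemma aZ_bialg : is_rho_bialgebra aZ zc.
Proof.
  intros t s. destruct s; try reflexivity.
  cbn [aZ Sig_map rho]. rewrite zc_app.
  match goal with |- context [zc (Tarr t1 t2) ?x] => destruct (zc (Tarr t1 t2) x) end; reflexivity.
Qed.

Fixpoint inh (t : Ty) : Tr t :=
  match t as t0 return Tr t0 with Tunit => Te | Tarr t1 t2 => TK1 t1 (inh t2) end.

Lemma progress t (p : Tr t) : (exists p', tstep p p') \/
  (match t as t0 return Tr t0 -> Prop with
   | Tunit => fun p => p = Te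
   | Tarr t1 t2 => fun p => forall u, exists p', lstep p u p' end) p.
Proof.
  induction p.
  - destruct v.
  - right; reflexivity.
  - left. destruct IHp1 as [[p' H]|H].
    + eexists; apply tstep_app1; eauto.
    + destruct (H p2) as [p' H']. eexists; apply tstep_app2; eauto.
  - right; intro; eexists; constructor.
  - right; intro; eexists; constructor.
  - right; intro; eexists; constructor.
  - right; intro; eexists; constructor.
  - right; intro; eexists; constructor.
  - right; intro; eexists; constructor.
Qed.

Section Adeq.
Variables (h : forall t, Tr t -> Z t) (Hh : is_alg_hom (op Void) aZ h).

Ltac hrw s := let E := fresh in pose proof (Hh _ (s : Sig Tr _)) as E; cbn [op] in E; rewrite E; clear E.

Lemma h_app t1 t2 (p : Tr (Tarr t1 t2)) q : h t2 (Tapp p q) = appZ t1 t2 (h _ p) (h _ q).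
Proof. exact (Hh _ (Sapp p q)). Qed.

Lemma lstep_sound t1 t2 (p : Tr (Tarr t1 t2)) u p' : lstep p u p' ->
  exists g, zc (Tarr t1 t2) (h _ p) = inr g /\ g (h _ u) = h _ p'.
Proof.
  destruct 1.
  - hrw (@SS Tr t1 t2 t3). eexists; split; [reflexivity|].
    symmetry; exact (Hh _ (@SS1 Tr _ _ _ u)).
  - hrw (SS1 p). eexists; split; [reflexivity|].
    symmetry; exact (Hh _ (SS2 p u)).
  - hrw (SS2 p q). eexists; split; [reflexivity|].
    cbn [Sig_map aZ]. rewrite !h_app. reflexivity.
  - hrw (@SK Tr t1 t2). eexists; split; [reflexivity|].
    symmetry; exact (Hh _ (@SK1 Tr _ t2 u)).
  - hrw (SK1 t2 p). eexists; split; reflexivity.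
  - hrw (@SI Tr t). eexists; split; reflexivity.
Qed.

Lemma tstep_sound t (p p' : Tr t) : tstep p p' -> zc t (h t p) = inl (h t p').
Proof.
  induction 1.
  - rewrite !h_app, zc_app, IHtstep. reflexivity.
  - destruct (lstep_sound _ _ _ _ _ H) as [g [Hg1 Hg2]].
    rewrite h_app, zc_app, Hg1, Hg2. reflexivity.
Qed.

Lemma h_Te : zc Tunit (h Tunit Te) = inr tt.
Proof. hrw (@Se Tr). reflexivity. Qed.

Lemma prog2 t (q : Tr t) : (exists q', tstep q q') \/ (exists r, zc t (h t q) = inr r).
Proof.
  destruct (progress t q) as [H|H]; [left; auto | right].
  destruct t.
  - subst. rewrite h_Te. eauto.
  - destruct (H (inh t1)) as [q' Hq]. destruct (lstep_sound _ _ _ _ _ Hq) as [g [Hg _]]. eauto.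
Qed.

Lemma adequacy t (p q : Tr t) : h t p = h t q -> sab_sim t p q.
Proof.
  intro E. exists (fun t p q => h t p = h t q). split; auto.
  split; [|split; [|split]].
  - intro t0. constructor; intro; intros; congruence.
  - intros t0 p0 q0 p0' R St.
    pose proof (tstep_sound _ _ _ St) as Sp.
    destruct (prog2 _ q0) as [[q0' Sq]|[r Hr]].
    + exists q0'; split; auto. pose proof (tstep_sound _ _ _ Sq) as Sq'.
      rewrite R, Sq' in Sp. inversion Sp; auto.
    + rewrite R, Hr in Sp. discriminate.
  - intros p0 q0 R Ok. destruct Ok.
    destruct (progress Tunit q0) as [[q0' Sq]|Hq].
    + pose proof (tstep_sound _ _ _ Sq) as Sq'. rewrite <- R, h_Te in Sq'. discriminate.
    + simpl in Hq. subst. constructor.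
  - intros t1 t2 p0 q0 u p0' R Ls.
    destruct (lstep_sound _ _ _ _ _ Ls) as [g [Hg1 Hg2]].
    destruct (progress _ q0) as [[q0' Sq]|Hq].
    + pose proof (tstep_sound _ _ _ Sq) as Sq'. rewrite <- R, Hg1 in Sq'. discriminate.
    + simpl in Hq. destruct (Hq u) as [q0' Lq]. exists q0'; split; auto.
      destruct (lstep_sound _ _ _ _ _ Lq) as [g' [Hg1' Hg2']].
      rewrite <- R, Hg1 in Hg1'. inversion Hg1'; subst. congruence.
Qed.

End Adeq.

Theorem theorem5p2 :
  exists (Z : SSet) (z : HCoalg Z),
    locally_final z /\
    (forall (Z' : SSet) (z' : HCoalg Z'), locally_final z' ->
       exists (f : forall t, Z t -> Z' t) (g : forall t, Z' t -> Z t), hcoalg_iso z z' f g) /\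
    exists a : Alg Z,
      is_rho_bialgebra a z /\
      forall h : forall t, Tr t -> Z t,
        is_alg_hom (op Void) a h ->
        forall (t : Ty) (p q : Tr t), h t p = h t q -> sab_sim t p q.
Proof.
  exists Z, zc. split; [apply zc_final|]. split.
  - intros Z' z' Hz'. eexists; eexists; apply (build_iso Z' z' Hz').
  - exists aZ. split; [apply aZ_bialg|]. intros h Hh t p q. apply adequacy; auto.
Qed.
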